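(* Let $f$ be proper lower semicontinuous with the K\L{} property at $x^*$ with desingularizing function $\varphi:[0,\eta[\to[0,\infty[$, the K\L{} inequality holding on $\Gamma_\eta(x^*,\delta)$. Let $(x^k)$ satisfy $\mathbf{H}_1$, $\mathbf{H}_2$, $\mathbf{H}_3$, put $M=\sup_{k\ge1}\frac1{a_kb_k}$, and assume $\mathbf{S}(x^*,\delta,\rho)$ holds. Then for all $K\ge1$, $x^K\in\underline{\Gamma}_\eta(x^*,\rho)$ and $$\sum_{k=1}^K\|x^{k+1}-x^k\|+\|x^{K+1}-x^K\|\le\|x^1-x^0\|+M\big[\varphi(f(x^1)-f(x^* ))-\varphi(f(x^{K+1})-f(x^* ))\big]+\sum_{k=1}^K\varepsilon_k.$$
   Context: $\partial f$ limiting Fréchet subdifferential, lazy slope $\|\partial f(x)\|_-=\inf_{p\in\partial f(x)}\|p\|$. K\L{} inequality on $\Gamma_\eta(x^*,\delta)=\{x:\|x-x^*\|<\delta,\ f(x^* )<f(x)<f(x^* )+\eta\}$: $\varphi'(f(x)-f(x^* ))\|\partial f(x)\|_-\ge1$, with $\varphi$ continuous concave, $\varphi(0)=0$, $C^1$ with $\varphi'>0$ on $]0,\eta[$. $\underline{\Gamma}_\eta(x^*,r)=\{x:\|x-x^*\|<r,\ f(x^* )\le f(x)<f(x^* )+\eta\}$, $\Gamma_\eta(x^*,r)$ the same with strict inequality $f(x^* )<f(x)$. $\mathbf{H}_1$: $f(x^{k+1})+a_k\|x^{k+1}-x^k\|^2\le f(x^k)$, $a_k>0$. $\mathbf{H}_2$: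 $b_{k+1}\|\partial f(x^{k+1})\|_-\le\|x^{k+1}-x^k\|+\varepsilon_{k+1}$, $b_{k+1}>0$, $\varepsilon_{k+1}\ge0$. $\mathbf{H}_3$: (i) $a_k\ge\underline a>0$; (ii) $(b_k)\notin\ell^1$; (iii) $M<\infty$; (iv) $(\varepsilon_k)\in\ell^1$. $\mathbf{S}(x^*,\delta,\rho)$: $\delta>\rho>0$ and (i) for each $k$, if $x^0,\dots,x^k\in\underline{\Gamma}_\eta(x^*,\rho)$ then $x^{k+1}\in\underline{\Gamma}_\eta(x^*,\delta)$; (ii) $x^0\in\Gamma_\eta(x^*,\rho)$ and $\|x^*-x^0\|+2\sqrt{\frac{f(x^0)-f(x^* )}{a_0}}+M\varphi(f(x^0)-f(x^* ))+\sum_{i=1}^\infty\varepsilon_i<\rho$. *)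

(* Defs.v *)
From Stdlib Require Import Reals Lra Classical ClassicalEpsilon.
Open Scope R_scope.
Set Implicit Arguments.

Record Hilbert : Type := {
  hcar :> Type;
  hplus : hcar -> hcar -> hcar;
  hopp : hcar -> hcar;
  hzero : hcar;
  hscal : R -> hcar -> hcar;
  hinner : hcar -> hcar -> R;
  hplus_assoc : forall x y z, hplus x (hplus y z) = hplus (hplus x y) z;
  hplus_comm : forall x y, hplus x y = hplus y x;
  hplus_0 : forall x, hplus x hzero = x;
  hplus_opp : forall x, hplus x (hopp x) = hzero;
  hscal_assoc : forall a b x, hscal a (hscal b x) = hscal (a * b) x;
  hscal_1 : forall x, hscal 1 x = x;
  hscal_distr_l : forall a x y, hscal a (hplus x y) = hplus (hscal a x) (hscal a y);
  hscal_distr_r : forall a b x, hscal (a + b) x = hplus (hscal a x) (hscal b x);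
  hinner_sym : forall x y, hinner x y = hinner y x;
  hinner_plus_l : forall x y z, hinner (hplus x y) z = hinner x z + hinner y z;
  hinner_scal_l : forall a x y, hinner (hscal a x) y = a * hinner x y;
  hinner_pos : forall x, 0 <= hinner x x;
  hinner_def : forall x, hinner x x = 0 -> x = hzero;
  hcomplete : forall u : nat -> hcar,
    (forall e, e > 0 -> exists N, forall m n, (m >= N)%nat -> (n >= N)%nat ->
        sqrt (hinner (hplus (u m) (hopp (u n))) (hplus (u m) (hopp (u n)))) < e) ->
    exists l, forall e, e > 0 -> exists N, forall n, (n >= N)%nat ->
        sqrt (hinner (hplus (u n) (hopp l)) (hplus (u n) (hopp l))) < e
}.

Arguments hplus {h}. Arguments hopp {h}. Arguments hzero {h}.
Arguments hscal {h}. Arguments hinner {h}.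

Definition hminus {H : Hilbert} (x y : H) : H := hplus x (hopp y).
Definition hnorm {H : Hilbert} (x : H) : R := sqrt (hinner x x).

Inductive ereal : Type := EFin (r : R) | EPinf.

Definition ele (a b : ereal) : Prop :=
  match a, b with
  | EFin x, EFin y => x <= y
  | _, EPinf => True
  | EPinf, EFin _ => False
  end.
Definition elt (a b : ereal) : Prop :=
  match a, b with
  | EFin x, EFin y => x < y
  | EFin _, EPinf => True
  | EPinf, _ => False
  end.
Definition eaddr (a : ereal) (r : R) : ereal :=
  match a with EFin x => EFin (x + r) | EPinf => EPinf end.
(** product of a positive real with an extended real (c * (+∞) = +∞) *)
Definition emulr (c : R) (a : ereal) : ereal :=
  match a with EFin x => EFin (c * x) | EPinf => EPinf end.
(** real part of a finite value (only used where finiteness is known) *)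
Definition fv (a : ereal) : R := match a with EFin x => x | EPinf => 0 end.

Definition proper {H : Hilbert} (f : H -> ereal) : Prop := exists x, f x <> EPinf.

Definition lsc {H : Hilbert} (f : H -> ereal) : Prop :=
  forall x (c : R), elt (EFin c) (f x) ->
    exists d, d > 0 /\ forall y, hnorm (hminus y x) < d -> elt (EFin c) (f y).

(** Fréchet subdifferential: p ∈ ∂̂f(x) iff f(x) finite and
    liminf_{y->x, y<>x} (f y - f x - <p,y-x>)/||y-x|| >= 0. *)
Definition frechet_subdiff {H : Hilbert} (f : H -> ereal) (x p : H) : Prop :=
  exists fx, f x = EFin fx /\
    forall e, e > 0 -> exists d, d > 0 /\ forall y, hnorm (hminus y x) < d ->
      ele (EFin (fx + hinner p (hminus y x) - e * hnorm (hminus y x))) (f y).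

(** Limiting (Fréchet) subdifferential: x_k -> x, f(x_k) -> f(x),
    p_k ∈ ∂̂f(x_k), p_k ⇀ p (weakly). *)
Definition limiting_subdiff {H : Hilbert} (f : H -> ereal) (x p : H) : Prop :=
  exists fx, f x = EFin fx /\
  exists (u q : nat -> H) (fu : nat -> R),
    (forall k, frechet_subdiff f (u k) (q k)) /\
    (forall k, f (u k) = EFin (fu k)) /\
    Un_cv (fun k => hnorm (hminus (u k) x)) 0 /\
    Un_cv fu fx /\
    (forall y, Un_cv (fun k => hinner (q k) y) (hinner p y)).

Definition slope_set {H : Hilbert} (f : H -> ereal) (x : H) (r : R) : Prop :=
  exists p, limiting_subdiff f x p /\ r = - hnorm p.

Lemma slope_set_bound {H : Hilbert} (f : H -> ereal) (x : H) : bound (slope_set f x).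
Proof.
  exists 0. intros r [p [_ ->]]. unfold hnorm. pose proof (sqrt_pos (hinner p p)). lra.
Qed.

(** Lazy slope ||∂f(x)||_- = inf_{p ∈ ∂f(x)} ||p||  (= +∞ if ∂f(x) = ∅). *)
Definition lazy_slope {H : Hilbert} (f : H -> ereal) (x : H) : ereal :=
  match excluded_middle_informative (exists r, slope_set f x r) with
  | left h => EFin (- proj1_sig (completeness _ (slope_set_bound f x) h))
  | right _ => EPinf
  end.

(** Γ_η(xs,r) (strict: f(xs) < f(x)) and underline Γ_η(xs,r) (f(xs) <= f(x)),
    where fs = f(xs) is finite. *)
Definition Gamma {H : Hilbert} (f : H -> ereal) (xs : H) (fs eta r : R) (x : H) : Prop :=
  hnorm (hminus x xs) < r /\ elt (EFin fs) (f x) /\ elt (f x) (EFin (fs + eta)).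
Definition Gamma_low {H : Hilbert} (f : H -> ereal) (xs : H) (fs eta r : R) (x : H) : Prop :=
  hnorm (hminus x xs) < r /\ ele (EFin fs) (f x) /\ elt (f x) (EFin (fs + eta)).

Definition desing (eta : R) (phi dphi : R -> R) : Prop :=
  (forall t, 0 <= t < eta -> 0 <= phi t) /\
  phi 0 = 0 /\
  (forall t, 0 <= t < eta -> forall e, e > 0 -> exists d, d > 0 /\
      forall s, 0 <= s < eta -> Rabs (s - t) < d -> Rabs (phi s - phi t) < e) /\
  (forall s t l, 0 <= s < eta -> 0 <= t < eta -> 0 <= l <= 1 ->
      l * phi s + (1 - l) * phi t <= phi (l * s + (1 - l) * t)) /\
  (forall t, 0 < t < eta -> derivable_pt_lim phi t (dphi t)) /\
  (forall t, 0 < t < eta -> continuity_pt dphi t) /\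
  (forall t, 0 < t < eta -> 0 < dphi t).

Definition KL_on {H : Hilbert} (f : H -> ereal) (xs : H) (fs eta delta : R)
  (dphi : R -> R) : Prop :=
  forall x, Gamma f xs fs eta delta x ->
    ele (EFin 1) (emulr (dphi (fv (f x) - fs)) (lazy_slope f x)).

(* Main.v *)
Require Import Defs.
From Stdlib Require Import Reals.
Open Scope R_scope.
From Stdlib Require Import Lra Lia Psatz.

Lemma hin0 (V : Hilbert) (z : V) : hinner hzero z = 0.
Proof. pose proof (hinner_plus_l V hzero hzero z) as E. rewrite hplus_0 in E. lra. Qed.
Lemma hinopp_l (V : Hilbert) (y z : V) : hinner (hopp y) z = - hinner y z.
Proof. pose proof (hinner_plus_l V y (hopp y) z) as E. rewrite hplus_opp, hin0 in E. lra. Qed.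
Lemma hinplus_r (V : Hilbert) (x y z : V) : hinner x (hplus y z) = hinner x y + hinner x z.
Proof. rewrite hinner_sym, hinner_plus_l, (hinner_sym V y), (hinner_sym V z). reflexivity. Qed.
Lemma hinscal_r (V : Hilbert) a (x y : V) : hinner x (hscal a y) = a * hinner x y.
Proof. rewrite hinner_sym, hinner_scal_l, hinner_sym. reflexivity. Qed.
Lemma hinopp_r (V : Hilbert) (y z : V) : hinner z (hopp y) = - hinner z y.
Proof. rewrite hinner_sym, hinopp_l, hinner_sym. reflexivity. Qed.

Lemma hnorm_pos (V : Hilbert) (u : V) : 0 <= hnorm u.
Proof. apply sqrt_pos. Qed.

Lemma hnorm_sym (V : Hilbert) (x y : V) : hnorm (hminus x y) = hnorm (hminus y x).
Proof.
  unfold hnorm, hminus. f_equal.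
  rewrite !hinner_plus_l, !hinplus_r, !hinopp_l, !hinopp_r, (hinner_sym V x y). ring.
Qed.

Lemma hminus_tri (V : Hilbert) (x y z : V) : hminus x z = hplus (hminus x y) (hminus y z).
Proof.
  unfold hminus. rewrite <- hplus_assoc. rewrite (hplus_assoc V (hopp y)).
  rewrite (hplus_comm V (hopp y) y), hplus_opp, (hplus_comm V hzero), hplus_0. reflexivity.
Qed.

Lemma CS (V : Hilbert) (u v : V) : (hinner u v)^2 <= hinner u u * hinner v v.
Proof.
  assert (Q : forall t, 0 <= hinner u u + 2 * t * hinner u v + t^2 * hinner v v).
  { intro t. pose proof (hinner_pos V (hplus u (hscal t v))) as P.
    rewrite !hinner_plus_l, !hinplus_r, !hinner_scal_l, !hinscal_r, (hinner_sym V v u) in P.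
    nra. }
  pose proof (hinner_pos V u). pose proof (hinner_pos V v).
  set (A := hinner u u) in *. set (B := hinner u v) in *. set (C := hinner v v) in *.
  destruct (Req_dec C 0) as [C0|C0].
  - destruct (Req_dec B 0) as [B0|B0].
    + rewrite B0, C0. lra.
    + exfalso. specialize (Q (-(A+1)/(2*B))). rewrite C0 in Q.
      replace (A + 2 * (- (A + 1) / (2 * B)) * B + (- (A + 1) / (2 * B)) ^ 2 * 0) with (-1) in Q
        by (field; auto). lra.
  - specialize (Q (-B/C)).
    assert (E : A * C - B^2 = C * (A + 2 * (- B / C) * B + (- B / C) ^ 2 * C)) by (field; auto).
    nra.
Qed.

Lemma htri (V : Hilbert) (u v : V) : hnorm (hplus u v) <= hnorm u + hnorm v.
Proof.
  unfold hnorm.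
  rewrite !hinner_plus_l, !hinplus_r, (hinner_sym V v u).
  pose proof (CS V u v). pose proof (hinner_pos V u). pose proof (hinner_pos V v).
  set (A := hinner u u) in *. set (B := hinner u v) in *. set (C := hinner v v) in *.
  pose proof (sqrt_pos A). pose proof (sqrt_pos C).
  pose proof (sqrt_sqrt A H0) as SA. pose proof (sqrt_sqrt C H1) as SC.
  assert (B <= sqrt A * sqrt C).
  { assert (E : B*B <= (sqrt A*sqrt C)*(sqrt A*sqrt C)).
    { replace ((sqrt A*sqrt C)*(sqrt A*sqrt C)) with ((sqrt A * sqrt A)*(sqrt C*sqrt C)) by ring.
      rewrite SA, SC. nra. }
    assert (0 <= sqrt A * sqrt C) by (apply Rmult_le_pos; lra).
    destruct (Rle_lt_dec B (sqrt A * sqrt C)). lra. nra. }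
  rewrite <- (sqrt_square (sqrt A + sqrt C)) by lra.
  apply sqrt_le_1_alt. nra.
Qed.

Lemma hdist_tri (V : Hilbert) (x y z : V) :
  hnorm (hminus x z) <= hnorm (hminus x y) + hnorm (hminus y z).
Proof. rewrite (hminus_tri V x y z). apply htri. Qed.

Lemma tangent eta phi dphi : desing eta phi dphi -> forall t s, 0 < t < eta -> 0 <= s < eta ->
  phi s <= phi t + dphi t * (s - t).
Proof.
  intros [_ [_ [_ [Hc [Hd _]]]]] t s Ht Hs.
  destruct (Rle_dec (phi s) (phi t + dphi t * (s - t))) as [|Hn]; [assumption|exfalso].
  set (c := phi s - phi t - dphi t * (s - t)).
  assert (cpos : 0 < c) by (unfold c; lra).
  set (h := s - t).
  assert (hnz : h <> 0). { intro E. unfold c in cpos. replace s with t in cpos by (unfold h in E; lra). lra. }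
  assert (ha : 0 < Rabs h) by (apply Rabs_pos_lt; auto).
  destruct (Hd t Ht (c / Rabs h)) as [del Hdel]. { apply Rdiv_lt_0_compat; lra. }
  pose proof (cond_pos del) as dpos.
  set (l := Rmin 1 (del / (2 * Rabs h))).
  assert (lpos : 0 < l). { unfold l. apply Rmin_glb_lt. lra. apply Rdiv_lt_0_compat; lra. }
  assert (l1 : l <= 1) by apply Rmin_l.
  assert (l2 : l <= del / (2 * Rabs h)) by apply Rmin_r.
  assert (lhnz : l * h <> 0) by (apply Rmult_integral_contrapositive; split; lra).
  assert (lhs : Rabs (l * h) < del).
  { rewrite Rabs_mult, (Rabs_right l) by lra.
    apply Rmult_le_compat_r with (r := Rabs h) in l2; [|lra].
    replace (del / (2 * Rabs h) * Rabs h) with (del / 2) in l2 by (field; lra). lra. }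
  specialize (Hdel (l * h) lhnz lhs).
  assert (Hcv := Hc s t l Hs (conj (Rlt_le _ _ (proj1 Ht)) (proj2 Ht)) (conj (Rlt_le _ _ lpos) l1)).
  replace (l * s + (1 - l) * t) with (t + l * h) in Hcv by (unfold h; ring).
  set (D := phi (t + l * h) - phi t) in *.
  assert (E1 : Rabs (D - dphi t * (l * h)) < c / Rabs h * Rabs (l * h)).
  { replace (D - dphi t * (l * h)) with ((D / (l * h) - dphi t) * (l * h)) by (field; repeat split; try lra; auto).
    rewrite Rabs_mult. apply Rmult_lt_compat_r. apply Rabs_pos_lt; auto. auto. }
  rewrite Rabs_mult, (Rabs_right l) in E1 by lra.
  replace (c / Rabs h * (l * Rabs h)) with (c * l) in E1 by (field; lra).
  apply Rabs_def2 in E1. destruct E1 as [E1 _].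
  unfold c in E1. unfold D in E1. unfold h in *. nra.
Qed.

Lemma sum_f_1_S g K : (1 <= K)%nat -> sum_f 1 (S K) g = sum_f 1 K g + g (S K).
Proof.
  intro HK. unfold sum_f. replace (S K - 1)%nat with (S (K - 1)) by lia. simpl.
  f_equal. f_equal. lia.
Qed.

Lemma sum_f_1_1 g : sum_f 1 1 g = g 1%nat.
Proof. reflexivity. Qed.

Lemma sumR0_split g K : (1 <= K)%nat -> sum_f_R0 g K = g 0%nat + sum_f 1 K g.
Proof.
  induction K as [|K IH]; intro HK; [lia|].
  destruct (Nat.eq_dec K 0) as [->|HK0].
  - simpl. reflexivity.
  - rewrite sum_f_1_S by lia. simpl. rewrite IH by lia. ring.
Qed.

Lemma sum_eps_le (e : nat -> R) E K : (1 <= K)%nat -> infinite_sum (fun i => e (S i)) E ->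
  (forall i, 0 <= e (S i)) -> sum_f 1 K e <= E.
Proof.
  intros HK HE Hp. unfold sum_f.
  rewrite (sum_eq _ (fun i => e (S i))) by (intros; f_equal; lia).
  apply sum_incr; auto.
Qed.

Lemma GLx (V : Hilbert) (f : V -> ereal) xs fs eta r y : Gamma_low f xs fs eta r y ->
  f y = EFin (fv (f y)) /\ fs <= fv (f y) < fs + eta /\ hnorm (hminus y xs) < r.
Proof.
  intros [N [A B]]. destruct (f y) as [v|]; simpl in *; [|contradiction]. auto.
Qed.

Theorem mainTheorem8 (H : Hilbert) (f : H -> ereal) (xs : H) (fs eta delta rho : R)
  (phi dphi : R -> R) (x : nat -> H) (a b eps : nat -> R) (M : R) :
  (* f proper, lsc, finite at xs *)
  proper f -> lsc f -> f xs = EFin fs ->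
  (* K\L property at xs *)
  0 < eta -> desing eta phi dphi -> KL_on f xs fs eta delta dphi ->
  (* H1 *)
  (forall k, 0 < a k /\
     ele (eaddr (f (x (S k))) (a k * (hnorm (hminus (x (S k)) (x k))) ^ 2)) (f (x k))) ->
  (* H2 *)
  (forall k, 0 < b (S k) /\ 0 <= eps (S k) /\
     ele (emulr (b (S k)) (lazy_slope f (x (S k))))
         (EFin (hnorm (hminus (x (S k)) (x k)) + eps (S k)))) ->
  (* H3 (i) *)
  (exists a_, 0 < a_ /\ forall k, a_ <= a k) ->
  (* H3 (ii) *)
  ~ (exists l, infinite_sum (fun k => Rabs (b k)) l) ->
  (* H3 (iii): M = sup over k>=1 of 1/(a_k b_k), finite *)
  is_lub (fun r => exists k, (1 <= k)%nat /\ r = / (a k * b k)) M ->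
  (* H3 (iv) *)
  (exists l, infinite_sum (fun k => Rabs (eps k)) l) ->
  (* S(xs, delta, rho) *)
  delta > rho -> rho > 0 ->
  (forall k, (forall i, (i <= k)%nat -> Gamma_low f xs fs eta rho (x i)) ->
     Gamma_low f xs fs eta delta (x (S k))) ->
  Gamma f xs fs eta rho (x 0%nat) ->
  (exists E, infinite_sum (fun i => eps (S i)) E /\
     hnorm (hminus xs (x 0%nat)) + 2 * sqrt ((fv (f (x 0%nat)) - fs) / a 0%nat)
       + M * phi (fv (f (x 0%nat)) - fs) + E < rho) ->
  forall K, (1 <= K)%nat ->
    Gamma_low f xs fs eta rho (x K) /\
    sum_f 1 K (fun k => hnorm (hminus (x (S k)) (x k))) + hnorm (hminus (x (S K)) (x K))
      <= hnorm (hminus (x 1%nat) (x 0%nat))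
         + M * (phi (fv (f (x 1%nat)) - fs) - phi (fv (f (x (S K))) - fs))
         + sum_f 1 K eps.
Proof.
  intros _ _ Hfs Heta Hdes HKL HH1 HH2 _ _ HM _ Hdr Hrho HS HX0 [E [HE Hrho0]] .
  pose (d := fun k => hnorm (hminus (x (S k)) (x k))).
  pose (r := fun k => fv (f (x k)) - fs).
  assert (dpos : forall k, 0 <= d k) by (intro; apply hnorm_pos).
  assert (Mub : forall k, (1 <= k)%nat -> / (a k * b k) <= M).
  { intros k Hk. apply (proj1 HM). exists k; auto. }
  assert (Mpos : 0 < M).
  { apply Rlt_le_trans with (/ (a 1%nat * b 1%nat)); [|apply Mub; lia].
    apply Rinv_0_lt_compat. apply Rmult_lt_0_compat; [apply (HH1 1%nat)|apply (HH2 0%nat)]. }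
  assert (phipos : forall t, 0 <= t < eta -> 0 <= phi t) by apply Hdes.
  assert (RD : forall y, Gamma_low f xs fs eta rho y -> Gamma_low f xs fs eta delta y).
  { intros y [A B]. split; [lra|auto]. }
  assert (STEP : forall j, Gamma_low f xs fs eta delta (x (S j)) ->
     Gamma_low f xs fs eta delta (x (S (S j))) ->
     2 * d (S j) <= d j + eps (S j) + M * (phi (r (S j)) - phi (r (S (S j))))).
  { intros j G1 G2.
    destruct (GLx _ _ _ _ _ _ _ G1) as [E1 [R1 N1]].
    destruct (GLx _ _ _ _ _ _ _ G2) as [E2 [R2 N2]].
    destruct (HH1 (S j)) as [apos Hle]. rewrite E1, E2 in Hle. simpl in Hle. replace (d (S j) * (d (S j) * 1)) with (d (S j) ^ 2) in Hle by ring.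
    destruct (HH2 j) as [bpos [epos Hb]].
    destruct (lazy_slope f (x (S j))) as [sg|] eqn:LS; simpl in Hb; [|contradiction].
    pose proof (Mub (S j) ltac:(lia)) as Mb.
    fold (d (S j)) in Hle. fold (d j) in Hb.
    assert (c0 : 0 <= d j + eps (S j)) by (pose proof (dpos j); lra).
    unfold r.
    set (F1 := fv (f (x (S j)))) in *. set (F2 := fv (f (x (S (S j))))) in *.
    pose proof (dpos (S j)) as dp.
    destruct (Req_dec F1 fs) as [Z|Z].
    - assert (d (S j) * d (S j) * a (S j) <= 0) by nra.
      assert (d (S j) * d (S j) <= 0) by nra.
      assert (Hd : d (S j) = 0) by nra.
      assert (HF : F2 = fs) by nra.
      rewrite Z, HF, Hd. lra.
    - assert (KL := HKL (x (S j))).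
      assert (Gs : Gamma f xs fs eta delta (x (S j))).
      { split; [lra|]. rewrite E1. simpl. split; lra. }
      specialize (KL Gs). rewrite LS in KL. simpl in KL. fold F1 in KL.
      assert (T := tangent _ _ _ Hdes (F1 - fs) (F2 - fs) ltac:(lra) ltac:(lra)).
      assert (dph : 0 < dphi (F1 - fs)) by (apply Hdes; lra).
      set (p := dphi (F1 - fs)) in *.
      set (D := phi (F1 - fs) - phi (F2 - fs)).
      set (u := a (S j)) in *. set (v := b (S j)) in *. set (c := d j + eps (S j)) in *.
      set (dl := d (S j)) in *.
      assert (A1 : p * (u * dl^2) <= D) by (unfold D; nra).
      assert (w0 : 0 <= u * dl^2) by (apply Rmult_le_pos; [lra|apply pow2_ge_0]).
      assert (Dp : 0 <= D) by (pose proof (Rmult_le_pos _ _ (Rlt_le _ _ dph) w0); lra).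
      assert (sgp : 0 < sg).
      { destruct (Rle_lt_dec sg 0); [|auto]. pose proof (Rmult_le_compat_l p sg 0 (Rlt_le _ _ dph) r0). lra. }
      assert (A2 : u * dl^2 <= D * sg).
      { pose proof (Rmult_le_compat_r sg _ _ (Rlt_le _ _ sgp) A1).
        pose proof (Rmult_le_compat_r (u*dl^2) _ _ w0 KL). nra. }
      assert (A3 : u * v * dl^2 <= D * c).
      { pose proof (Rmult_le_compat_r v _ _ (Rlt_le _ _ bpos) A2).
        pose proof (Rmult_le_compat_l D _ _ Dp Hb). nra. }
      assert (A4 : dl^2 <= M * D * c).
      { assert (uv : 0 < u * v) by nra.
        assert (dl^2 <= /(u*v) * (D * c)).
        { replace (dl^2) with (/(u*v) * (u*v*dl^2)) by (field; lra).
          apply Rmult_le_compat_l; [apply Rlt_le, Rinv_0_lt_compat; lra|nra]. }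
        assert (/(u*v) * (D*c) <= M * (D * c)) by (apply Rmult_le_compat_r; nra).
        nra. }
      fold D. assert (q0 : 0 <= M * D) by (apply Rmult_le_pos; lra).
      set (q := M * D) in *.
      assert (Q4 : 4 * dl^2 <= (c + q)^2) by (pose proof (pow2_ge_0 (c - q)); nra).
      destruct (Rle_lt_dec (2 * dl) (c + q)) as [|Hlt]; [lra|].
      assert (P : 0 < (2*dl - (c+q)) * (2*dl + (c+q))) by (apply Rmult_lt_0_compat; lra). nra. }
  assert (SUM : forall K, (1 <= K)%nat ->
     (forall i, (i <= S K)%nat -> Gamma_low f xs fs eta delta (x i)) ->
     sum_f 1 K d + d K <= d 0%nat + M * (phi (r 1%nat) - phi (r (S K))) + sum_f 1 K eps).
  { induction K as [|K IH]; intros HK Hall; [lia|].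
    destruct (Nat.eq_dec K 0) as [->|K0].
    - rewrite !sum_f_1_1. pose proof (STEP 0%nat (Hall 1%nat ltac:(lia)) (Hall 2%nat ltac:(lia))). lra.
    - rewrite !sum_f_1_S by lia.
      pose proof (IH ltac:(lia) ltac:(intros; apply Hall; lia)).
      destruct K as [|K']; [lia|].
      pose proof (STEP (S K') (Hall (S (S K')) ltac:(lia)) (Hall (S (S (S K'))) ltac:(lia))).
      lra. }
  assert (DIST : forall n, hnorm (hminus (x (S n)) xs) <= hnorm (hminus (x 0%nat) xs) + sum_f_R0 d n).
  { induction n as [|n IH].
    - simpl. pose proof (hdist_tri H (x 1%nat) (x 0%nat) xs). unfold d. lra.
    - simpl. pose proof (hdist_tri H (x (S (S n))) (x (S n)) xs). unfold d in *. lra. }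
  assert (X0 : Gamma_low f xs fs eta rho (x 0%nat)).
  { destruct HX0 as [A [B C]]. split; [auto|split; auto]. destruct (f (x 0%nat)); simpl in *; lra. }
  assert (X1 : Gamma_low f xs fs eta delta (x 1%nat)).
  { apply HS. intros i Hi. replace i with 0%nat by lia. auto. }
  destruct HX0 as [N0 [L0 U0]].
  destruct (f (x 0%nat)) as [F0|] eqn:EF0; simpl in L0, U0; [|contradiction].
  destruct (GLx _ _ _ _ _ _ _ X1) as [E1 [R1 _]].
  assert (Er0 : r 0%nat = F0 - fs) by (unfold r; rewrite EF0; reflexivity).
  assert (Ht0 : 0 < r 0%nat < eta) by lra.
  assert (Hphi10 : phi (r 1%nat) <= phi (r 0%nat)).
  { pose proof (tangent _ _ _ Hdes (r 0%nat) (r 1%nat) Ht0 ltac:(unfold r; lra)).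
    assert (0 < dphi (r 0%nat)) by (apply Hdes; auto).
    destruct (HH1 0%nat) as [a0 Hle]. rewrite E1, EF0 in Hle. simpl in Hle.
    assert (0 <= a 0%nat * (hnorm (hminus (x 1%nat) (x 0%nat)) * (hnorm (hminus (x 1%nat) (x 0%nat)) * 1))).
    { apply Rmult_le_pos; [lra|]. pose proof (hnorm_pos H (hminus (x 1%nat) (x 0%nat))). nra. }
    assert (r 1%nat - r 0%nat <= 0) by (rewrite Er0; unfold r; lra).
    pose proof (Rmult_le_compat_l (dphi (r 0%nat)) _ _ (Rlt_le _ _ H1) H3). lra. }
  assert (Hd0 : d 0%nat <= sqrt ((fv (f (x 0%nat)) - fs) / a 0%nat)).
  { destruct (HH1 0%nat) as [a0 Hle]. rewrite E1, EF0 in Hle. simpl in Hle. rewrite EF0. simpl.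
    fold (d 0%nat) in Hle.
    rewrite <- (sqrt_square (d 0%nat)) by auto. apply sqrt_le_1_alt.
    apply Rmult_le_reg_l with (a 0%nat); [lra|].
    replace (a 0%nat * ((F0 - fs) / a 0%nat)) with (F0 - fs) by (field; lra). lra. }
  assert (Eps : forall i, 0 <= eps (S i)) by (intro i; apply (HH2 i)).
  assert (Epos : 0 <= E).
  { pose proof (sum_incr _ 0 E HE Eps). simpl in H0. pose proof (Eps 0%nat). lra. }
  assert (Hsq : 0 <= sqrt ((fv (f (x 0%nat)) - fs) / a 0%nat)) by apply sqrt_pos.
  assert (Mphi0 : 0 <= M * phi (fv (f (x 0%nat)) - fs)).
  { apply Rmult_le_pos; [lra|]. apply phipos. rewrite EF0; simpl; lra. }
  assert (Mphi1 : M * phi (r 1%nat) <= M * phi (fv (f (x 0%nat)) - fs)).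
  { apply Rmult_le_compat_l; [lra|]. rewrite EF0. simpl. rewrite <- Er0. auto. }
  rewrite hnorm_sym in Hrho0.
  rewrite EF0 in Hd0, Hsq, Mphi0, Mphi1. simpl in Hrho0, Hd0, Hsq, Mphi0, Mphi1.
  assert (ALL : forall K i, (i <= K)%nat -> Gamma_low f xs fs eta rho (x i)).
  { induction K as [|K IH]; intros i Hi.
    - replace i with 0%nat by lia. auto.
    - destruct (Nat.le_gt_cases i K) as [Hik|Hik]; [auto|].
      replace i with (S K) by lia.
      assert (G := HS K IH).
      destruct (GLx _ _ _ _ _ _ _ G) as [EG [RG _]].
      destruct G as [_ GG]. split; [|exact GG].
      destruct K as [|J].
      + pose proof (DIST 0%nat) as DD. simpl in DD. lra.
      + pose proof (DIST (S J)) as DD. rewrite sumR0_split in DD by lia.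
        assert (Hall : forall i, (i <= S (S J))%nat -> Gamma_low f xs fs eta delta (x i)).
        { intros i0 Hi0. destruct (Nat.le_gt_cases i0 (S J)). apply RD; auto.
          replace i0 with (S (S J)) by lia. apply HS; auto. }
        pose proof (SUM (S J) ltac:(lia) Hall).
        pose proof (sum_eps_le eps E (S J) ltac:(lia) HE Eps).
        assert (0 <= M * phi (r (S (S J)))).
        { apply Rmult_le_pos; [lra|]. apply phipos. unfold r. lra. }
        pose proof (dpos (S J)). lra. }
  intros K HK. split; [apply (ALL K); lia|].
  assert (Hall : forall i, (i <= S K)%nat -> Gamma_low f xs fs eta delta (x i)).
  { intros i Hi. apply RD. apply (ALL (S K)); auto. }
  exact (SUM K HK Hall).
Qed.
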